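(* Let $0\le m<n$ and $\lambda\in\mathcal P_m$. For every highest weight vertex $b=x_1\otimes\cdots\otimes x_m$ of weight $\lambda$ of the $C_n$-crystal $(B_1^{C_n})^{\otimes m}$, $$\overline D(b)=\widetilde D(b)+\frac{m-|\lambda|}{2}.$$
   Context: $B_1^{C_n}$ has vertices $1,\dots,n,\overline n,\dots,\overline1$ with weights $\mathrm{wt}(i)=\varepsilon_i$, $\mathrm{wt}(\overline i)=-\varepsilon_i$ and arrows $i\xrightarrow{i}i+1$, $\overline{i+1}\xrightarrow{i}\overline i$ ($1\le i<n$), $n\xrightarrow{n}\overline n$. Tensor rule: $\tilde f_i(b\otimes b')=\tilde f_ib\otimes b'$ if $\varphi_i(b)>\varepsilon_i(b')$, else $b\otimes\tilde f_ib'$; $\tilde e_i(b\otimes b')=\tilde e_ib\otimes b'$ if $\varphi_i(b)\ge\varepsilon_i(b')$, else $b\otimes\tilde e_ib'$. Highest weight means $\varepsilon_i(b)=0$ for $1\le i\le n$; $\lambda\in\mathcal P_m$ (partition with at most $m$ parts) is identified with $\sum\lambda_i\varepsilon_i$ and $|\lambda|=\sum\lambda_i$. Two orders on the letters: $\le^C$: $1<2<\cdots<n<\overline n<\cdots<\overline2<\overline1$ (total); $\le^D$: $\overline n<\cdots<\overline2<\{1,\overline1\}<2<\cdots<n$, where $1$ and $\overline1$ are incomparable and each lies above $\overline2$ and below $2$. Define $\overline H(x\otimes y)=0$ if $x\ge^C y$, $=2$ if $(x,y)=(1,\overline1)$, and $=1$ otherwise; define $\widetilde H(x\otimes y)=0$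 if $x\ge^D y$, $=2$ if $(x,y)=(\overline n,n)$, and $=1$ otherwise (so e.g. $\widetilde H(1\otimes\overline1)=\widetilde H(\overline1\otimes1)=1$). Then $\overline D(b)=\sum_{i=1}^{m-1}(m-i)\overline H(x_i\otimes x_{i+1})$ and $\widetilde D(b)=\sum_{i=1}^{m-1}(m-i)\widetilde H(x_i\otimes x_{i+1})$. *)

(* Defs.v *)
From mathcomp Require Import all_boot all_order all_algebra.
Set Implicit Arguments. Unset Strict Implicit. Unset Printing Implicit Defensive.
Import GRing.Theory Num.Theory.

(* A vertex of B_1^{C_n}: (j, false) is the letter j+1, (j, true) is the
   barred letter \overline{j+1}, for j : 'I_n. *)
Definition letter (n : nat) := ('I_n * bool)%type.

Section Crystal.
Variable n : nat.
Implicit Types (x y : letter n) (c : nat).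

Definition lnum x : nat := (val x.1).+1.
Definition lbar x : bool := x.2.

(* e_c on a single letter, for 1 <= c <= n, following the arrows
   i -> i+1, \overline{i+1} -> \overline i (1 <= i < n), n -> \overline n. *)
Definition mkord (k : nat) : option 'I_n :=
  (if k < n as b return (k < n = b -> option 'I_n)
   then fun h => Some (Ordinal h) else fun _ => None) erefl.

Definition eL c x : option (letter n) :=
  if c == n then
    (if lbar x && (lnum x == n) then Some (x.1, false) else None)
  else if ~~ lbar x then
    (if lnum x == c.+1 then omap (fun j : 'I_n => (j, false)) (mkord (val x.1).-1)
     else None)
  else
    (if lnum x == c then omap (fun j : 'I_n => (j, true)) (mkord (val x.1).+1)
     else None).

Definition epsL c x : nat :=
  if c == n then (lbar x && (lnum x == n)) : nat
  else (if lbar x then lnum x == c else lnum x == c.+1) : nat.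

Definition phiL c x : nat :=
  if c == n then (~~ lbar x && (lnum x == n)) : nat
  else (if lbar x then lnum x == c.+1 else lnum x == c) : nat.

Fixpoint iter_count (g : seq (letter n) -> option (seq (letter n)))
    (k : nat) (w : seq (letter n)) : nat :=
  match k with
  | 0 => 0
  | k'.+1 => match g w with None => 0 | Some w2 => (iter_count g k' w2).+1 end
  end.

(* e_c on the tensor product x_1 ⊗ (x_2 ⊗ (... ⊗ x_m)), with the tensor rule
   e(b ⊗ b') = e b ⊗ b' if phi(b) >= eps(b'), else b ⊗ e b'.
   eps(b') is the number of times e_c can be applied to b' (at most size b'). *)
Fixpoint eword_fuel (fuel : nat) c (w : seq (letter n)) : option (seq (letter n)) :=
  match fuel, w with
  | 0, _ => None
  | _, [::] => None
  | f.+1, x :: w' =>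
      if iter_count (eword_fuel f c) (size w') w' <= phiL c x
      then omap (fun y => y :: w') (eL c x)
      else omap (cons x) (eword_fuel f c w')
  end.

Definition eword c (w : seq (letter n)) := eword_fuel (size w) c w.

Definition highest_weight (w : seq (letter n)) : Prop :=
  forall c, 1 <= c <= n -> eword c w = None.

Definition has_weight (w : seq (letter n)) (lam : seq nat) : Prop :=
  forall j : 'I_n,
    (Posz (count (pred1 (j, false)) w) - Posz (count (pred1 (j, true)) w))%R
    = Posz (nth 0 lam j).

(* the order <=^C : 1 < ... < n < \bar n < ... < \bar 1 *)
Definition rankC x : nat := if lbar x then (2 * n).-1 - val x.1 else val x.1.
Definition geC x y : bool := rankC y <= rankC x.

(* the partial order <=^D : \bar n < ... < \bar 2 < {1, \bar 1} < 2 < ... < n *)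
Definition valD x : int := if lbar x then (- Posz (val x.1))%R else Posz (val x.1).
Definition geD x y : bool := (x == y) || (valD y < valD x)%R.

Definition Hbar x y : nat :=
  if geC x y then 0
  else if (lnum x == 1) && ~~ lbar x && (lnum y == 1) && lbar y then 2 else 1.

Definition Htil x y : nat :=
  if geD x y then 0
  else if (lnum x == n) && lbar x && (lnum y == n) && ~~ lbar y then 2 else 1.

Definition Dgen (H : letter n -> letter n -> nat) (w : seq (letter n)) : nat :=
  match w with
  | [::] => 0
  | x0 :: _ =>
    let m := size w in
    \sum_(i < m.-1) (m - i.+1) * H (nth x0 w i) (nth x0 w i.+1)
  end.

Definition Dbar w := Dgen Hbar w.
Definition Dtil w := Dgen Htil w.

End Crystal.

Definition partition_atmost (m : nat) (lam : seq nat) : bool :=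
  sorted geq lam && all (fun p => 0 < p) lam && (size lam <= m).

(* Main.v *)
Require Import Defs.
From mathcomp Require Import all_boot all_order all_algebra zify ring.
Import GRing.Theory Num.Theory.

Section S.
Variable n : nat.
Lemma mkord_val k : omap val (mkord n k) = if k < n then Some k else None.
Proof.
rewrite /mkord. generalize (@erefl bool (k < n)).
by case: {2 3}(k < n) => [e|e]; rewrite e.
Qed.

Lemma eL_none c (x : letter n) : 1 <= c <= n -> (eL c x == None) = (epsL c x == 0).
Proof.
case: x => [[j hj] b] /andP[c1 cn].
have := mkord_val j.-1; have := mkord_val j.+1.
rewrite /eL /epsL /lnum /lbar /=.
case: (mkord n j.-1) => [o1|]; case: (mkord n j.+1) => [o2|] /= E2 E1.
all: case: b; move: E1 E2; repeat case: ifP; intros; try done; try discriminate; try lia.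
Qed.

Lemma eL_some c (x y : letter n) : 1 <= c <= n -> eL c x = Some y ->
  [/\ epsL c x = 1, epsL c y = 0 & phiL c y = (phiL c x).+1].
Proof.
case: x => [[j hj] b] /andP[c1 cn].
have := mkord_val j.-1; have := mkord_val j.+1.
rewrite /eL /epsL /phiL /lnum /lbar /=.
case: (mkord n j.-1) => [o1|]; case: (mkord n j.+1) => [o2|] /= E2 E1.
all: case: b; move: E1 E2; repeat case: ifP; intros; try done; try discriminate.
all: case: H => ?; subst y => /=.
all: try (move: E1 => [E1]); try (move: E2 => [E2]); split; simpl in *; try discriminate; try lia.
Qed.

Lemma epsL_le1 c (x : letter n) : epsL c x <= 1.
Proof. rewrite /epsL; case: ifP => _; [|case: ifP => _]; exact: leq_b1. Qed.

Fixpoint epsW c (w : seq (letter n)) : nat :=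
  match w with [::] => 0 | x :: w' => epsL c x + (epsW c w' - phiL c x) end.

Lemma epsW_size c w : epsW c w <= size w.
Proof. elim: w => //= x w IH; have := epsL_le1 c x; lia. Qed.

Definition spec c s (w : seq (letter n)) :=
  (eword_fuel s c w = None <-> epsW c w = 0) /\
  (forall w2, eword_fuel s c w = Some w2 -> size w2 = size w /\ epsW c w2 = (epsW c w).-1).

Lemma iter_spec c s (H : forall w, size w = s -> spec c s w) k w :
  size w = s -> iter_count (eword_fuel s c) k w = minn k (epsW c w).
Proof.
elim: k w => [|k IH] w sw /=; first by rewrite min0n.
have [H1 H2] := H w sw.
case E: (eword_fuel s c w) => [w2|].
  have [s2 e2] := H2 _ E.
  rewrite IH; last by rewrite s2.
  have : epsW c w <> 0 by move=> /H1; rewrite E.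
  rewrite e2; lia.
by rewrite (proj1 H1 E) minn0.
Qed.

Lemma eword_spec c : 1 <= c <= n -> forall s w, size w = s -> spec c s w.
Proof.
move=> hc; elim=> [|s IH] w.
  by case: w => // _; split => //= w2.
case: w => // x w' /= [sw'].
have IC := iter_spec c s IH (size w') w' sw'.
rewrite /spec /= IC.
have := epsW_size c w'; rewrite sw' => hs.
rewrite (minn_idPr hs).
have [H1 H2] := IH w' sw'.
case: leqP => hle.
  case E: (eL c x) => [y|] /=.
    have [e1 e2 e3] := eL_some _ _ _ hc E.
    split; first by split => //; rewrite e1.
    move=> w2 [<-] /=; rewrite e1 e2 e3; split; lia.
  have /eqP e0 : epsL c x == 0 by rewrite -(eL_none _ x hc) E.
  split; last by [].
  split => // _; rewrite e0; lia.
case E: (eword_fuel s c w') => [w2|] /=.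
  have [s2 e2] := H2 _ E.
  split; first by split => //; lia.
  move=> _ [<-] /=; rewrite s2 e2; split => //; lia.
have := proj1 H1 E; lia.
Qed.

Lemma hw_epsW (w : seq (letter n)) : highest_weight w ->
  forall c, 1 <= c <= n -> epsW c w = 0.
Proof.
move=> hw c hc; have [H1 _] := eword_spec c hc _ w (erefl (size w)).
by apply/H1; apply: hw.
Qed.
End S.

Section SB.
Local Open Scope ring_scope.
Variable n : nat.
Definition mu (P : seq (letter n)) (j : nat) : int :=
  (count (fun x : letter n => (val x.1 == j) && ~~ x.2) P)%:Z
  - (count (fun x : letter n => (val x.1 == j) && x.2) P)%:Z.
Definition ac c P : int := if c == n then mu P n.-1 else mu P c.-1 - mu P c.

Lemma mu_rcons P (x : letter n) j : mu (rcons P x) j =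
  mu P j + ((val x.1 == j) && ~~ x.2)%N%:Z - ((val x.1 == j) && x.2)%N%:Z.
Proof. rewrite /mu -!cats1 !count_cat /= !addn0 !PoszD; lia. Qed.

Lemma ac_rcons c P (x : letter n) : (1 <= c <= n)%N ->
  ac c (rcons P x) = ac c P + (phiL c x)%:Z - (epsL c x)%:Z.
Proof.
case: x => [[j hj] b] hc; rewrite /ac !mu_rcons /phiL /epsL /lnum /lbar /=.
case: b => /=; repeat case: eqP; intros; simpl; lia.
Qed.
Definition Inv (P : seq (letter n)) := forall j, 0 <= mu P j /\ ((size P <= j)%N -> mu P j = 0).

Lemma step P (x : letter n) : Inv P ->
  (forall c, (1 <= c <= n)%N -> (epsL c x)%:Z <= ac c P) ->
  Inv (rcons P x) /\ (x.2 -> (val x.1 < size P)%N).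
Proof.
case: x => [[j hj] b] IP Hc /=.
have lt : (if b then 1 <= mu P j else (j <= size P)%N).
  case: b Hc => Hc.
    have hc : (1 <= j.+1 <= n)%N by lia.
    have := Hc _ hc; rewrite /ac /epsL /lnum /lbar /=.
    have [I1 I2] := IP j; have [I3 I4] := IP j.+1.
    case: eqP => [e|ne]; rewrite ?eqxx /=.
      move=> h; rewrite (_ : n.-1 = j) in h; last lia. lia.
    move=> h; lia.
  case: j hj Hc => [|j] hj Hc //.
  have hc : (1 <= j.+1 <= n)%N by lia.
  have := Hc _ hc; rewrite /ac /epsL /lnum /lbar /=.
  have [I1 I2] := IP j; have [I3 I4] := IP j.+1.
  case: eqP => [e|ne]; first lia.
  rewrite eqxx /= => h. case: (leqP (size P) j) => // /I2; lia.
clear Hc.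
have [I3 I4] := IP j.
have lt2 : b -> (j < size P)%N.
  move=> hb; rewrite hb in lt; case: (leqP (size P) j) => // /I4; lia.
split; last by [].
move=> i; rewrite mu_rcons size_rcons /=.
have [I1 I2] := IP i.
case: b lt lt2 => /= lt lt2; case: eqP => [<-|ne] /=; split; try lia.
all: have := lt2 isT; lia.
Qed.

Lemma main_inv (x0 : letter n) S P : Inv P ->
  (forall c, (1 <= c <= n)%N -> (epsW n c S)%:Z <= ac c P) ->
  forall k, (k < size S)%N -> (nth x0 S k).2 -> (val (nth x0 S k).1 < size P + k)%N.
Proof.
have T : forall (a b d : nat) (e : int), (Posz (d + (a - b))%N <= e) -> (Posz a <= e + Posz b - Posz d) by move=> a b d e; lia.
elim: S P => [|x S IH] P IP H k //= hk.
have H1 : forall c, (1 <= c <= n)%N -> (epsL c x)%:Z <= ac c P.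
  move=> c hc; have := H c hc => /=; lia.
have [IP' hx] := step _ _ IP H1.
case: k hk => [|k] hk /=.
  by move=> /hx; rewrite addn0.
move=> hb.
have H2 : forall c, (1 <= c <= n)%N -> (epsW n c S)%:Z <= ac c (rcons P x).
  move=> c hc; rewrite ac_rcons //; have := H c hc => /=.
apply: T.
by have := IH _ IP' H2 k hk hb; rewrite size_rcons addSnnS.
Qed.
End SB.
Section SC.
Local Open Scope ring_scope.

Lemma Hid n (x y : letter n) : ~~ (x.2 && (val x.1 == n.-1)%N) ->
  (Hbar x y)%:Z = (Htil x y)%:Z + (y.2 : nat)%:Z - (x.2 : nat)%:Z.
Proof.
case: x y => [[i hi] a] [[j hj] b] /=.
rewrite /Hbar /Htil /geC /geD /rankC /valD /lnum /lbar /= xpair_eqE.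
have -> : (Ordinal hi == Ordinal hj) = (i == j)%N by [].
case: a; case: b => /= h; rewrite ?ltrN2 ?ltz_nat; repeat case: ifP; intros; simpl in *; try lia.
Qed.

Lemma telescope_w (L : nat) (s : nat -> int) :
  \sum_(i < L) (L - i)%N%:Z * (s i.+1 - s i) = \sum_(i < L) s i.+1 - L%:Z * s 0%N.
Proof.
elim: L => [|L IH]; first by rewrite !big_ord0 mul0r subr0.
have e : forall i : 'I_L.+1, (L.+1 - i)%N%:Z = (L - i)%N%:Z + 1.
  move=> i; have := ltn_ord i; lia.
under eq_bigr => i _ do rewrite e mulrDl mul1r.
rewrite big_split /= big_ord_recr /= subnn mul0r addr0 IH.
rewrite (big_ord_recr L (fun i => s i.+1)) /=.
have -> : \sum_(i < L.+1) (s i.+1 - s i) = s L.+1 - s 0%N.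
  elim: (L.+1) => [|k IHk]; first by rewrite big_ord0 subrr.
  by rewrite big_ord_recr /= IHk; ring.
rewrite -[L.+1]addn1 PoszD mulrDl mul1r; ring.
Qed.

Lemma sum_snd (T : Type) (w : seq (T * bool)) x0 :
  (\sum_(i < size w) ((nth x0 w i).2 : nat) = count snd w)%N.
Proof.
elim: w => [|x w IH] /=; first by rewrite big_ord0.
by rewrite big_ord_recl /= -IH.
Qed.

Lemma sumn_nth (lam : seq nat) k : (size lam <= k)%N ->
  (\sum_(j < k) nth 0 lam j = sumn lam)%N.
Proof.
elim: lam k => [|a lam IH] k /= hs.
  by rewrite big1 // => j _; rewrite nth_nil.
case: k hs => [|k] // hs.
by rewrite big_ord_recl /= IH.
Qed.

Lemma weight_sum n (w : seq (letter n)) :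
  \sum_(j : 'I_n) ((count (pred1 (j, false)) w)%:Z - (count (pred1 (j, true)) w)%:Z)
  = (count (fun x : letter n => ~~ x.2) w)%:Z - (count snd w)%:Z.
Proof.
elim: w => [|x w IH] /=.
  by rewrite big1 // => j _; rewrite subrr.
have e : forall (j : 'I_n) b, (x == (j, b)) = (j == x.1) && (x.2 == b).
  by case: x {IH} => a c j b; rewrite xpair_eqE eq_sym.
under eq_bigr => j _ do rewrite !PoszD !e.
have key : forall b, \sum_(j : 'I_n) (((j == x.1) && (x.2 == b)) : nat)%:Z = ((x.2 == b) : nat)%:Z.
  move=> b; rewrite (bigD1 x.1) //= eqxx /= big1 ?addr0 // => j /negbTE -> //.
have -> : \sum_(j : 'I_n) (((j == x.1) && (x.2 == false) : nat)%:Z + (count (pred1 (j, false)) w)%:Z -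
   (((j == x.1) && (x.2 == true) : nat)%:Z + (count (pred1 (j, true)) w)%:Z))
  = \sum_(j : 'I_n) (((j == x.1) && (x.2 == false)) : nat)%:Z - \sum_(j : 'I_n) (((j == x.1) && (x.2 == true)) : nat)%:Z
    + \sum_(j : 'I_n) ((count (pred1 (j, false)) w)%:Z - (count (pred1 (j, true)) w)%:Z).
  rewrite -sumrB -big_split /=; apply: eq_bigr => j _; ring.
rewrite !key IH !PoszD; case: (x.2) => /=; ring.
Qed.

End SC.

Lemma Posz_sum I (r : seq I) (F : I -> nat) :
  Posz (\sum_(i <- r) F i)%N = (\sum_(i <- r) (F i)%:Z)%R.
Proof. exact: (big_morph Posz PoszD (erefl _)). Qed.

Lemma hw_barred n (b : seq (letter n)) x0 : highest_weight b ->
  forall k, k < size b -> (nth x0 b k).2 -> val (nth x0 b k).1 < k.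
Proof.
move=> hw k hk hb.
have I0 : Inv n [::] by move=> j; rewrite /mu /=; lia.
have H0 : forall c, 1 <= c <= n -> ((epsW n c b)%:Z <= ac n c [::])%R.
  move=> c hc; rewrite (hw_epsW n b hw c hc) /ac /mu /=; case: ifP => _; lia.
by have := main_inv n x0 b [::] I0 H0 k hk hb.
Qed.

Theorem proposition39 (n m : nat) (lam : seq nat) (b : seq (letter n)) :
  m < n -> partition_atmost m lam -> size b = m ->
  highest_weight b -> has_weight b lam ->
  ((Dbar b)%:R : rat) = ((Dtil b)%:R + (m%:R - (sumn lam)%:R) / 2)%R.
Proof.
move=> hmn /andP[/andP[_ _] hlam] hsz hw hwt.
case: b hsz hw hwt => [|x0 b'] hsz hw hwt.
  subst m; case: lam hlam {hwt} => // _.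
set w := x0 :: b'.
set L := size b'.
have hm : m = L.+1 by rewrite -hsz.
have bar := hw_barred _ _ x0 hw.
have s0 : x0.2 = false.
  case E: x0.2 => //; have := bar 0 (ltn0Sn _); rewrite /= E; move/(_ isT); lia.
have noN : forall i, i < L -> ~~ ((nth x0 w i).2 && (val (nth x0 w i).1 == n.-1)).
  move=> i hi; apply/negP => /andP[hb /eqP he].
  have := bar i (leq_trans hi (leqnSn _)) hb; rewrite he; lia.
pose s k := Posz (nth x0 w k).2.
have eD : Posz (Dbar w) = (Posz (Dtil w) + Posz (count snd b'))%R.
  rewrite /Dbar /Dtil /= !Posz_sum.
  under eq_bigr => i _ do rewrite PoszM (Hid _ _ _ (noN i (ltn_ord i))) subSS.
  have -> : forall F : 'I_L -> int, (\sum_(i < L) Posz (L - i) * (F i + Posz (nth x0 b' i).2 - Posz (nth x0 w i).2)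
     = \sum_(i < L) Posz (L - i) * F i + \sum_(i < L) Posz (L - i) * (s i.+1 - s i))%R.
    by move=> F; rewrite -big_split /=; apply: eq_bigr => i _; rewrite /s /=; ring.
  rewrite telescope_w /s /= s0 mulr0 subr0.
  under [in RHS]eq_bigr => i _ do rewrite PoszM subSS.
  congr (_ + _)%R.
  rewrite -Posz_sum; congr Posz; exact: sum_snd.
have hU : (Posz (count (fun x : letter n => ~~ x.2) w) - Posz (count snd w) = Posz (sumn lam))%R.
  rewrite -weight_sum (eq_bigr (fun j : 'I_n => Posz (nth 0 lam j))); last by move=> j _; exact: hwt.
  rewrite -Posz_sum sumn_nth //; lia.
have hC : count (fun x : letter n => ~~ x.2) w + count snd w = size w.
  by rewrite addnC; exact: count_predC.
have hB : count snd w = count snd b' by rewrite /w /= s0.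
have e1 : Dbar w = Dtil w + count snd b' by lia.
have e2 : m = sumn lam + 2 * count snd b' by rewrite /w in hC hU hsz hB; lia.
rewrite e1 e2 !natrD; field; by [].
Qed.
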